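(* Let $n\ge 2$ be an integer and $M$ a real $n\times n$ matrix with all entries in $\{0,1\}$. Let $t$ be the number of entries equal to $1$ and $k := t/n$. Then: if $t < n$: $|\det M| \le k^{n/2}$; if $t = n$: $|\det M| \le 1$; if $t > n$: $|\det M| \le k^{\frac{n+1}{2}}\left(\frac{n-k}{n-1}\right)^{\frac{n-1}{2}}$. *)

(* Defs.v *)
(* Real numbers are modelled by an arbitrary real closed field
   R : rcfType (the statement is purely algebraic/order-theoretic). *)
From HB Require Import structures.
From mathcomp Require Import all_boot all_order all_algebra.
Set Implicit Arguments. Unset Strict Implicit. Unset Printing Implicit Defensive.
Import Order.TTheory GRing.Theory Num.Theory.
Local Open Scope ring_scope.

Definition ones_count (R : rcfType) (n : nat) (M : 'M[R]_n) : nat :=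
  #|[pred p : 'I_n * 'I_n | M p.1 p.2 == 1]|.

Definition half_pow (R : rcfType) (x : R) (m : nat) : R := Num.sqrt (x ^+ m).

(* Main.v *)
Require Import Defs.
From HB Require Import structures.
From mathcomp Require Import all_boot all_order all_algebra.
From mathcomp Require Import ring lra.
Set Implicit Arguments. Unset Strict Implicit. Unset Printing Implicit Defensive.
Import Order.TTheory GRing.Theory Num.Theory.
Local Open Scope ring_scope.


Section Householder.
Variable R : rcfType.

Definition dot m (a b : 'cV[R]_m) : R := (a^T *m b) 0 0.

Lemma dotE m (a b : 'cV[R]_m) : a^T *m b = (dot a b)%:M.
Proof. exact: mx11_scalar. Qed.

Lemma dot_sum m (a b : 'cV[R]_m) : dot a b = \sum_i a i 0 * b i 0.
Proof. by rewrite /dot mxE; apply: eq_bigr => i _; rewrite mxE. Qed.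

Lemma dotC m (a b : 'cV[R]_m) : dot a b = dot b a.
Proof. by rewrite !dot_sum; apply: eq_bigr => i _; rewrite mulrC. Qed.

Lemma dot_ge0 m (a : 'cV[R]_m) : 0 <= dot a a.
Proof. by rewrite dot_sum; apply: sumr_ge0 => i _; rewrite -expr2 sqr_ge0. Qed.

Lemma dot_eq0 m (a : 'cV[R]_m) : dot a a = 0 -> a = 0.
Proof.
have H0 i : true -> 0 <= a i 0 * a i 0 by move=> _; rewrite -expr2 sqr_ge0.
rewrite dot_sum => /psumr_eq0P H; apply/matrixP => i j.
rewrite (ord1 j) !mxE.
have /eqP := H H0 i isT.
by rewrite mulf_eq0 orbb => /eqP.
Qed.

Lemma dotBl m (a b c : 'cV[R]_m) : dot (a - b) c = dot a c - dot b c.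
Proof. rewrite /dot raddfB /=. by rewrite mulmxBl !mxE. Qed.

Lemma dotZl m x (a c : 'cV[R]_m) : dot (x *: a) c = x * dot a c.
Proof. by rewrite /dot linearZ /= -scalemxAl mxE. Qed.

Lemma dotBr m (a b c : 'cV[R]_m) : dot c (a - b) = dot c a - dot c b.
Proof. by rewrite dotC dotBl !(dotC c). Qed.

Lemma dotZr m x (a c : 'cV[R]_m) : dot c (x *: a) = x * dot c a.
Proof. by rewrite dotC dotZl dotC. Qed.

Definition e0 m : 'cV[R]_m.+1 := delta_mx 0 0.

Lemma dote0 m (c : 'cV[R]_m.+1) : dot (e0 m) c = c 0 0.
Proof. by rewrite /dot /e0 trmx_delta -rowE !mxE. Qed.

Section HH.
Variables (m : nat) (c : 'cV[R]_m.+1).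
Let r := Num.sqrt (dot c c).
Let v := c - r *: e0 m.
Let s := dot v v.
Definition hh : 'M[R]_m.+1 := 1%:M - (2 / s) *: (v *m v^T).

Lemma hh_tr : hh^T = hh.
Proof. by rewrite /hh linearB /= trmx1 linearZ /= trmx_mul trmxK. Qed.

Lemma hh_sq : hh *m hh = 1%:M.
Proof.
have XX : (v *m v^T) *m (v *m v^T) = s *: (v *m v^T).
  by rewrite mulmxA -(mulmxA v) dotE mul_mx_scalar -scalemxAl.
rewrite /hh mulmxBl mulmxBr mul1mx mulmxBr mulmx1 -!scalemxAl -!scalemxAr.
rewrite scalerA XX scalerA.
have [s0|s0] := eqVneq s 0.
  by rewrite s0 invr0 !mulr0 !scale0r !subr0.
rewrite mul1mx.
have -> : 2 / s * (2 / s) * s = 2 / s + 2 / s by field.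
rewrite scalerDl; set X := (_ *: (v *m v^T)).
by rewrite opprD opprK addKr addrNK.
Qed.

Lemma hh_c : hh *m c = r *: e0 m.
Proof.
have cc : dot c c = r ^+ 2 by rewrite sqr_sqrtr // dot_ge0.
have [s0|s0] := eqVneq s 0.
  rewrite /hh s0 invr0 mulr0 scale0r subr0 mul1mx.
  by apply/eqP; rewrite -subr_eq0; apply/eqP/dot_eq0.
have e00 : dot (e0 m) (e0 m) = 1 by rewrite dote0 mxE !eqxx.
have w : dot v c = r ^+ 2 - r * c 0 0 by rewrite /v dotBl dotZl dote0 cc.
have sv : s = 2 * (r ^+ 2 - r * c 0 0).
  rewrite /s /v !dotBl !dotBr !dotZl !dotZr dote0 e00 (dotC c) dote0 cc.
  ring.
rewrite /hh mulmxBl mul1mx -scalemxAl -mulmxA dotE mul_mx_scalar scalerA.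
have -> : 2 / s * dot v c = 1.
  rewrite w; rewrite sv in s0 *; field.
  by move: s0; rewrite mulf_eq0 negb_or => /andP[].
by rewrite scale1r /v opprB addrC subrK.
Qed.
End HH.
End Householder.

Section Had.
Variable R : rcfType.
Definition cn2 n (N : 'M[R]_n) j : R := \sum_i N i j ^+ 2.

Lemma cn2E n (N : 'M[R]_n) j : cn2 N j = (N^T *m N) j j.
Proof. by rewrite /cn2 mxE; apply: eq_bigr => i _; rewrite mxE expr2. Qed.

Lemma cn2_ge0 n (N : 'M[R]_n) j : 0 <= cn2 N j.
Proof. by apply: sumr_ge0 => i _; rewrite sqr_ge0. Qed.

Lemma cn2_orth n (H N : 'M[R]_n) j : H^T *m H = 1%:M -> cn2 (H *m N) j = cn2 N j.
Proof.
by move=> HT; rewrite !cn2E trmx_mul -mulmxA (mulmxA H^T) HT mul1mx.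
Qed.

Lemma det_orth n (H : 'M[R]_n) : H^T *m H = 1%:M -> \det H ^+ 2 = 1.
Proof. by move=> HT; rewrite expr2 -{1}det_tr -det_mulmx HT det1. Qed.

Lemma hadamard n (N : 'M[R]_n) : \det N ^+ 2 <= \prod_j cn2 N j.
Proof.
elim: n N => [|n IH] N; first by rewrite det_mx00 big_ord0 expr1n.
set H := hh (col 0 N); set P := H *m N.
have HT : H^T *m H = 1%:M by rewrite hh_tr hh_sq.
have dP : \det N ^+ 2 = \det P ^+ 2.
  by rewrite det_mulmx exprMn (det_orth HT) mul1r.
have Pi0 i : i != 0 -> P i 0 = 0.
  move=> i0; have -> : P i 0 = col 0 P i 0 by rewrite [RHS]mxE.
  rewrite colE /P -mulmxA -colE hh_c /e0 !mxE.
  by rewrite (negbTE i0) mulr0.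
have detP : \det P = P 0 0 * \det (row' 0 (col' 0 P)).
  rewrite (expand_det_col P 0) big_ord_recl big1 ?addr0.
    by rewrite /cofactor addn0 expr0 mul1r.
  by move=> i _; rewrite Pi0 ?mul0r // neq_lift.
have c0 : cn2 P 0 = P 0 0 ^+ 2.
  rewrite /cn2 big_ord_recl big1 ?addr0 // => i _.
  by rewrite Pi0 ?expr0n // neq_lift.
have cle j : cn2 (row' 0 (col' 0 P)) j <= cn2 P (lift 0 j).
  rewrite [cn2 P _]/cn2 big_ord_recl -[X in X <= _]add0r lerD ?sqr_ge0 //.
  by rewrite le_eqVlt; apply/orP; left; apply/eqP/eq_bigr => i _; rewrite !mxE.
have -> : \prod_j cn2 N j = \prod_j cn2 P j by apply: eq_bigr => j _; rewrite cn2_orth.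
rewrite dP detP exprMn (big_ord_recl _ (cn2 P)) c0.
apply: ler_wpM2l; first exact: sqr_ge0.
apply: le_trans (IH _) _.
by apply: ler_prod => j _; rewrite cn2_ge0 cle.
Qed.
End Had.

Section Ar.
Variable R : rcfType.
Lemma bern (s d : R) p : 0 <= s -> 0 <= d ->
  s ^+ p.+1 + p.+1%:R * d * s ^+ p <= (s + d) ^+ p.+1.
Proof.
move=> s0 d0; elim: p => [|p IH]; first by rewrite expr1 expr0 mulr1 mul1r.
have h := ler_wpM2r (addr_ge0 s0 d0) IH.
rewrite [(s + d) ^+ p.+2]exprSr.
apply: le_trans h.
have h1 : 0 <= s ^+ p by rewrite exprn_ge0.
rewrite !exprS -[p.+2]addn1 -[p.+1]addn1 !natrD.
set A := s ^+ p; set q : R := p%:R.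
have h3 : 0 <= q by rewrite ler0n.
have : 0 <= (q + 1) * (d * (d * A)) by rewrite mulr_ge0 ?addr_ge0 // mulr_ge0 // mulr_ge0.
nra.
Qed.

Lemma mono (x y T : R) p : 0 <= x -> x <= y -> y <= T ->
  T - y <= p.+1%:R * x -> y * (T - y) ^+ p.+1 <= x * (T - x) ^+ p.+1.
Proof.
move=> x0 xy yT h.
have := @bern (T - y) (y - x) p ltac:(by rewrite subr_ge0) ltac:(by rewrite subr_ge0).
have -> : T - y + (y - x) = T - x by ring.
set S := (T - y); set q : R := p.+1%:R => hb.
have S0 : 0 <= S by rewrite subr_ge0.
have hs : 0 <= (y - x) * S ^+ p by rewrite mulr_ge0 ?exprn_ge0 ?subr_ge0.
have e : S ^+ p.+1 = S * S ^+ p by rewrite exprS.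
have := ler_wpM2l x0 hb.
have := ler_wpM2r hs h.
rewrite e in hb * => h1 h2.
rewrite -/S -/q in h1; move: h1 h2; clearbody S q; set B := (T - x) ^+ p.+1; set A := S ^+ p; move=> h1 h2; nra.
Qed.
End Ar.

Lemma amgm (R : rcfType) p (E : 'I_p -> R) : (forall i, 0 <= E i) ->
  \prod_i E i <= ((\sum_i E i) / p%:R) ^+ p.
Proof.
move=> E0.
have := @leif_AGM R 'I_p predT E (fun i _ => E0 i).
case=> h _; move: h; by rewrite card_ord.
Qed.


Lemma sumM (R : rcfType) n (M : 'M[R]_n) (h01 : forall i j, M i j = 0 \/ M i j = 1) :
  \sum_i \sum_j M i j = (ones_count M)%:R.
Proof.
rewrite pair_bigA /ones_count -sum1_card natr_sum big_mkcond /=.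
rewrite [RHS]big_mkcond; apply: eq_bigr => -[i j] _ /=; rewrite inE /=.
by case: (h01 i j) => ->; rewrite ?eqxx //= eq_sym oner_eq0.
Qed.

Theorem mainTheorem13 (R : rcfType) (n : nat) (hn : (2 <= n)%N)
  (M : 'M[R]_n) (h01 : forall i j, M i j = 0 \/ M i j = 1) :
  let t := ones_count M in
  let k : R := t%:R / n%:R in
  [/\ (t < n)%N -> `|\det M| <= half_pow k n,
      t = n -> `|\det M| <= 1
    & (n < t)%N ->
      `|\det M| <= half_pow k n.+1 * half_pow ((n%:R - k) / (n%:R - 1)) n.-1].
Proof.
case: n hn M h01 => [|[|m]] // _ M h01 t k.
set N : R := m.+2%:R.
have N0 : 0 < N by rewrite ltr0n.
have e01 i j : M i j ^+ 2 = M i j by case: (h01 i j) => ->; rewrite ?expr0n ?expr1n.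
have M0 i j : 0 <= M i j by case: (h01 i j) => ->.
have sM := sumM h01; rewrite -/t in sM.
have tk : t%:R = N * k by rewrite /k mulrC divfK // gt_eqF.
have k0 : 0 <= k by rewrite divr_ge0 ?ler0n.
have part12 : \det M ^+ 2 <= k ^+ m.+2.
  rewrite -det_tr; apply: le_trans (hadamard _) _.
  have -> : \prod_j cn2 M^T j = \prod_i \sum_j M i j.
    by apply: eq_bigr => i _; apply: eq_bigr => j _; rewrite mxE e01.
  apply: le_trans (amgm _) _.
    by move=> i; apply: sumr_ge0 => j _.
  by rewrite sM.
split.
- move=> _; rewrite /half_pow -sqrtr_sqr ler_sqrt ?exprn_ge0 //.
- move=> tn; have k1 : k = 1 by rewrite /k tn divff // gt_eqF.
  by rewrite -sqrtr_sqr -sqrtr1 ler_sqrt // -(expr1n _ m.+2) -k1.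
move=> nt.
set q := m.+1.
have k1 : 1 < k.
  by rewrite /k ltr_pdivlMr // mul1r ltr_nat.
clearbody k.
set sN := Num.sqrt N.
have sN0 : 0 < sN by rewrite sqrtr_gt0.
have sN2 : sN ^+ 2 = N by rewrite sqr_sqrtr // ltW.
pose u : 'cV[R]_m.+2 := sN^-1 *: const_mx 1.
have uu : dot u u = 1.
  rewrite dot_sum (eq_bigr (fun _ => N^-1)); last first.
    by move=> i _; rewrite !mxE mulr1 -expr2 exprVn sN2.
  by rewrite sumr_const card_ord -mulr_natl divff // gt_eqF.
set Q := hh u.
have QT : Q^T *m Q = 1%:M by rewrite hh_tr hh_sq.
have Qu : Q *m u = e0 R m.+1 by rewrite hh_c uu sqrtr1 scale1r.
have Qe : Q *m e0 R m.+1 = u by rewrite -Qu mulmxA hh_sq mul1mx.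
have Qi0 i : Q i 0 = sN^-1.
  have -> : Q i 0 = col 0 Q i 0 by rewrite [RHS]mxE.
  by rewrite colE -/(e0 R m.+1) Qe !mxE mulr1.
set P := M *m Q.
have dP : \det M ^+ 2 = \det P ^+ 2 by rewrite det_mulmx exprMn (det_orth QT) mulr1.
set a := cn2 P 0.
pose b (j : 'I_q) := cn2 P (lift 0 j).
have hP : \det M ^+ 2 <= a * \prod_j b j.
  by rewrite dP -big_ord_recl; apply: hadamard.
have tot : a + \sum_j b j = t%:R.
  rewrite -big_ord_recl -sM.
  have -> : \sum_j cn2 P j = \tr (P^T *m P) by apply: eq_bigr => j _; rewrite cn2E.
  rewrite trmx_mul -mulmxA mxtrace_mulC -mulmxA -mulmxA hh_tr hh_sq mulmx1.
  rewrite exchange_big; apply: eq_bigr => j _; rewrite mxE; apply: eq_bigr => i _.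
  by rewrite mxE -expr2 e01.
pose rs i := \sum_j M i j.
have ha : a = (\sum_i rs i ^+ 2) / N.
  rewrite /a /cn2 mulr_suml; apply: eq_bigr => i _.
  rewrite mxE (eq_bigr (fun l => M i l * sN^-1)); last by move=> l _; rewrite Qi0.
  by rewrite -mulr_suml exprMn exprVn sN2.
have sq : \sum_i (rs i - k) ^+ 2 = \sum_i rs i ^+ 2 - 2 * k * t%:R + N * k ^+ 2.
  rewrite (eq_bigr (fun i => rs i ^+ 2 - 2 * k * rs i + k ^+ 2)); last first.
    by move=> i _; ring.
  rewrite big_split big_split /= sumrN -mulr_sumr sM sumr_const card_ord.
  by rewrite [N * _]mulr_natl.
have ak : k ^+ 2 <= a.
  have : 0 <= \sum_i (rs i - k) ^+ 2 by apply: sumr_ge0 => i _; apply: sqr_ge0.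
  rewrite sq tk ha ler_pdivlMr // => h.
  nra.
have b0 j : 0 <= b j by apply: cn2_ge0.
have hb := amgm b0.
have Pb : 0 <= \prod_j b j by apply: prodr_ge0.
have sb : \sum_j b j = t%:R - a by rewrite -tot addrC addKr.
rewrite sb in hb.
have a0 : 0 <= a by apply: cn2_ge0.
have at0 : a <= t%:R by rewrite -tot lerDl; apply: sumr_ge0.
have Nq : N = q%:R + 1 by rewrite /N -addn1 natrD.
have qk : t%:R - a <= q%:R * k ^+ 2 by rewrite tk Nq; nra.
have hm := mono (sqr_ge0 k) ak at0 qk.
have q0 : 0 < q%:R ^+ q :> R by rewrite exprn_gt0 // ltr0n.
have hm' : a * (t%:R - a) ^+ q <= k ^+ q.+2 * (N - k) ^+ q.
  apply: le_trans hm _.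
  rewrite (_ : t%:R - k ^+ 2 = k * (N - k)); last by rewrite tk; ring.
  by rewrite exprMn !exprS le_eqVlt; apply/orP; left; apply/eqP; ring.
have fin : \det M ^+ 2 <= k ^+ q.+2 * ((N - k) / (N - 1)) ^+ q.
  have -> : N - 1 = q%:R by rewrite Nq addrK.
  apply: le_trans hP _; apply: le_trans (ler_wpM2l a0 hb) _.
  rewrite [((t%:R - a) / _) ^+ _]expr_div_n [((N - k) / _) ^+ _]expr_div_n.
  by rewrite !mulrA ler_pM2r ?invr_gt0.
rewrite /half_pow /= -sqrtrM ?exprn_ge0 // -sqrtr_sqr ler_sqrt //.
exact: le_trans (sqr_ge0 _) fin.
Qed.
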